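(* Let $q \geq 5$ be a prime power and let $\mathcal{X}$ be a plane curve of degree $q-1$ defined over $\mathbb{F}_q$ without $\mathbb{F}_q$-linear components with $\mathrm{N}_q(\mathcal{X}) = (q-1)^2$. Fix a point $Q_0 \in Z(\mathcal{X})$ and an $\mathbb{F}_q$-line $l_\infty$ not passing through $Q_0$. Suppose there are $\mathbb{F}_q$-lines $l_1, \dots, l_t$ through $Q_0$, with $2 \le t \le q-1$, such that $l_i(\mathbb{F}_q) \setminus (\{Q_0\} \cup l_\infty) \subseteq \mathcal{X}(\mathbb{F}_q)$ for $i=1,\dots,t$. Let $l$ be an $\mathbb{F}_q$-line through $Q_0$ different from $l_1,\dots,l_t$. If $\#\big((l \setminus l_\infty)(\mathbb{F}_q) \cap \mathcal{X}(\mathbb{F}_q)\big) \geq q - t$, then $l(\mathbb{F}_q) \setminus (\{Q_0\} \cup l_\infty(\mathbb{F}_q)) \subseteq \mathcal{X}(\mathbb{F}_q)$.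
   Context: $\mathcal{X}(\mathbb{F}_q)=\mathcal{X}\cap\mathbb{P}^2(\mathbb{F}_q)$, $\mathrm{N}_q(\mathcal{X})=\#\mathcal{X}(\mathbb{F}_q)$; ''without $\mathbb{F}_q$-linear components'' means no line defined over $\mathbb{F}_q$ is a component. $Z(\mathcal{X}) := \mathbb{P}^2(\mathbb{F}_q) \setminus \mathcal{X}(\mathbb{F}_q)$. For a line $l$, $l(\mathbb{F}_q)$ is its set of $\mathbb{F}_q$-rational points. *)

(* Defs.v *)
From HB Require Import structures.
From mathcomp Require Import all_boot all_order all_algebra all_field.
From mathcomp Require Import mpoly.
Set Implicit Arguments. Unset Strict Implicit. Unset Printing Implicit Defensive.
Import GRing.Theory.
Local Open Scope ring_scope.

(* Projective plane P^2(K) over a finite field K: a point (or a line, via its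
   coefficient vector) is represented by its unique normalized homogeneous
   coordinate vector (first nonzero coordinate equal to 1). *)
Definition normalized (K : fieldType) (P : {ffun 'I_3 -> K}) : bool :=
  [|| P ord0 == 1,
      (P ord0 == 0) && (P (inord 1) == 1)
    | [&& P ord0 == 0, P (inord 1) == 0 & P (inord 2) == 1]].

Definition onLine (K : fieldType) (L P : {ffun 'I_3 -> K}) : bool :=
  \sum_(i < 3) L i * P i == 0.

Definition linform (K : fieldType) (L : {ffun 'I_3 -> K}) : {mpoly K[3]} :=
  \sum_(i < 3) L i *: 'X_i.

Definition onCurve (K : fieldType) (F : {mpoly K[3]}) (P : {ffun 'I_3 -> K}) : bool :=
  F.@[P] == 0.

Definition plane_curve (K : fieldType) (d : nat) (F : {mpoly K[3]}) : Prop :=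
  F != 0 /\ F \is d.-homog.

Definition no_rational_linear_component (K : fieldType) (F : {mpoly K[3]}) : Prop :=
  forall L : {ffun 'I_3 -> K}, normalized L -> ~ (exists G, F = linform L * G).

Definition rat_points (K : finFieldType) (F : {mpoly K[3]}) : {set {ffun 'I_3 -> K}} :=
  [set P | normalized P && onCurve F P].

Definition Nq (K : finFieldType) (F : {mpoly K[3]}) : nat := #|rat_points F|.

(* Main.v *)
Require Import Defs.
From HB Require Import structures.
From mathcomp Require Import all_boot all_order all_algebra all_field.
From mathcomp Require Import mpoly.
From mathcomp Require Import ring zify.
Set Implicit Arguments. Unset Strict Implicit. Unset Printing Implicit Defensive.
Import GRing.Theory.
Local Open Scope ring_scope.


Section Geo.
Variable K : fieldType.
Local Notation vec := {ffun 'I_3 -> K}.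

Definition i1 : 'I_3 := inord 1.
Definition i2 : 'I_3 := inord 2.
Definition c0 (x : vec) := x ord0.
Definition c1 (x : vec) := x i1.
Definition c2 (x : vec) := x i2.

Lemma sum3 (f : 'I_3 -> K) : \sum_(i < 3) f i = f ord0 + f i1 + f i2.
Proof.
rewrite !big_ord_recr big_ord0 /= add0r; congr (f _ + f _ + f _); apply/val_inj => //=.
  by rewrite /i1 inordK.
by rewrite /i2 inordK.
Qed.

Lemma ord3P (i : 'I_3) : [\/ i = ord0, i = i1 | i = i2].
Proof.
case: i => [[|[|[|k]]] hk].
- by apply: Or31; apply/val_inj.
- by apply: Or32; apply/val_inj; rewrite /= inordK.
- by apply: Or33; apply/val_inj; rewrite /= inordK.
- by [].
Qed.

Lemma vecP (x y : vec) : c0 x = c0 y -> c1 x = c1 y -> c2 x = c2 y -> x = y.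
Proof.
move=> h0 h1 h2; apply/ffunP => i; by case: (ord3P i) => ->.
Qed.

Definition mkv (a b c : K) : vec :=
  [ffun i : 'I_3 => if (i : nat) == 0%N then a else if (i : nat) == 1%N then b else c].

Lemma c0mkv a b c : c0 (mkv a b c) = a. Proof. by rewrite /c0 ffunE. Qed.
Lemma c1mkv a b c : c1 (mkv a b c) = b. Proof. by rewrite /c1 /i1 ffunE inordK. Qed.
Lemma c2mkv a b c : c2 (mkv a b c) = c. Proof. by rewrite /c2 /i2 ffunE inordK. Qed.

Definition dot (x y : vec) := c0 x * c0 y + c1 x * c1 y + c2 x * c2 y.
Lemma dotE (x y : vec) : \sum_(i < 3) x i * y i = dot x y.
Proof. by rewrite sum3. Qed.

Definition cross (a b : vec) : vec :=
  mkv (c1 a * c2 b - c2 a * c1 b) (c2 a * c0 b - c0 a * c2 b) (c0 a * c1 b - c1 a * c0 b).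
Definition det (a b c : vec) := dot (cross a b) c.
Definition comb (x : vec) (a : K) (y : vec) (b : K) (z : vec) : vec :=
  mkv (c0 x + a * c0 y + b * c0 z) (c1 x + a * c1 y + b * c1 z) (c2 x + a * c2 y + b * c2 z).
Definition scv (a : K) (x : vec) : vec := mkv (a * c0 x) (a * c1 x) (a * c2 x).

Definition cE := (c0mkv, c1mkv, c2mkv).

Lemma vec0 (x : vec) : x = 0 :> vec <-> [/\ c0 x = 0, c1 x = 0 & c2 x = 0].
Proof.
split; first by move=> ->; rewrite /c0 /c1 /c2 !ffunE.
by case=> h0 h1 h2; apply: vecP; rewrite ?h0 ?h1 ?h2 /c0 /c1 /c2 !ffunE.
Qed.

Lemma cross_eq0 (x y : vec) : y != 0 -> cross x y = 0 ->
  exists mu, x = scv mu y.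
Proof.
move=> ny /vec0 []; rewrite !cE => e0 e1 e2.
have key : forall u v : 'I_3, x u * y v = x v * y u.
  have s1 : x i1 * y i2 = x i2 * y i1 by apply/eqP; rewrite -subr_eq0; apply/eqP.
  have s2 : x i2 * y ord0 = x ord0 * y i2 by apply/eqP; rewrite -subr_eq0; apply/eqP.
  have s3 : x ord0 * y i1 = x i1 * y ord0 by apply/eqP; rewrite -subr_eq0; apply/eqP.
  move=> u v; case: (ord3P u) => ->; case: (ord3P v) => -> //;
  by rewrite ?s1 ?s2 ?s3 // -?s1 -?s2 -?s3.
have [j yj] : exists j, y j != 0.
  apply/existsP; apply: contraR ny; rewrite negb_exists => /forallP h.
  by apply/eqP/ffunP => k; rewrite ffunE; apply/eqP; move: (h k); rewrite negbK.
exists (x j / y j); apply: vecP; rewrite /scv !cE /c0 /c1 /c2.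
- by rewrite mulrAC -key mulfK.
- by rewrite mulrAC -key mulfK.
- by rewrite mulrAC -key mulfK.
Qed.

End Geo.
Arguments c0 {K}. Arguments c1 {K}. Arguments c2 {K}.


Section Geo2.
Variable K : fieldType.
Local Notation vec := {ffun 'I_3 -> K}.

Lemma scvE a (x : vec) i : scv a x i = a * x i.
Proof. by case: (ord3P i) => ->; rewrite -/(c0 _) -/(c1 _) -/(c2 _) !cE. Qed.

Lemma scv1 (x : vec) : scv 1 x = x.
Proof. by apply/ffunP => i; rewrite scvE mul1r. Qed.

Lemma normalizedE (x : vec) : normalized x =
  [|| c0 x == 1, (c0 x == 0) && (c1 x == 1) | [&& c0 x == 0, c1 x == 0 & c2 x == 1]].
Proof. by []. Qed.

Lemma norm_neq0 (x : vec) : normalized x -> x != 0.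
Proof.
rewrite normalizedE; apply: contraL => /eqP ->; rewrite /c0 /c1 /c2 ffunE ffunE ffunE.
by rewrite eqxx eq_sym oner_eq0.
Qed.

Lemma norm_uniq (x y : vec) mu : normalized x -> normalized y -> x = scv mu y -> x = y.
Proof.
move=> hx hy e.
have h0 : c0 x = mu * c0 y by rewrite e /c0 scvE.
have h1 : c1 x = mu * c1 y by rewrite e /c1 scvE.
have h2 : c2 x = mu * c2 y by rewrite e /c2 scvE.
suff mu1 : mu = 1 by rewrite e mu1 scv1.
move: hx hy; rewrite !normalizedE h0 h1 h2 => hx.
case/or3P => [/eqP y0|/andP[/eqP y0 /eqP y1]|/and3P[/eqP y0 /eqP y1 /eqP y2]];
  move: hx; rewrite ?y0 ?y1 ?y2 ?mulr0 ?mulr1 ?eqxx ?oner_eq0 /= ?andbF ?andbT ?orbF.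
- case/or3P => [/eqP //|/andP[/eqP m0 h]|/and3P[/eqP m0 _ h]];
    by rewrite m0 mul0r eq_sym oner_eq0 in h.
- rewrite (eq_sym 0 1) oner_eq0 /=; case/orP => [/eqP //|/andP[/eqP m0 h]].
  by rewrite m0 mul0r eq_sym oner_eq0 in h.
- by rewrite (eq_sym 0 1) oner_eq0 /= => /eqP.
Qed.

Lemma nrm_ex (x : vec) : x != 0 -> exists2 r, r != 0 & normalized (scv r x).
Proof.
move=> nx.
have [x0|x0] := eqVneq (c0 x) 0.
  have [x1|x1] := eqVneq (c1 x) 0.
    have [x2|x2] := eqVneq (c2 x) 0; first by case/eqP: nx; apply/vec0.
    exists (c2 x)^-1; first by rewrite invr_eq0.
    by rewrite normalizedE !cE x0 x1 mulr0 mulVf //; apply/or3P; apply: Or33; apply/and3P; split; apply/eqP.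
  exists (c1 x)^-1; first by rewrite invr_eq0.
  by rewrite normalizedE !cE x0 mulr0 mulVf //; apply/or3P; apply: Or32; apply/andP; split; apply/eqP.
exists (c0 x)^-1; first by rewrite invr_eq0.
by rewrite normalizedE !cE mulVf // eqxx.
Qed.

Lemma hom_eval (F : {mpoly K[3]}) d a (x : vec) : F \is d.-homog ->
  F.@[scv a x] = a ^+ d * F.@[x].
Proof.
move=> hF; rewrite !mevalE mulr_sumr; apply: eq_big_seq => m hm.
rewrite mulrCA; congr (_ * _).
under eq_bigr do rewrite scvE exprMn.
by rewrite big_split /= prodrXr -mdegE (dhomog_mf hF hm).
Qed.

End Geo2.


Section Alg.
Variable K : finFieldType.
Local Notation q := #|K|.

Lemma q_gt1 : (1 < q)%N.
Proof. exact: finNzRing_gt1. Qed.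

Lemma fermat (x : K) : x != 0 -> x ^+ q.-1 = 1.
Proof.
move=> nx; have := expf_card x; rewrite -(ltn_predK q_gt1) exprS => h.
by apply: (mulfI nx); rewrite mulr1.
Qed.

Lemma poly_vanish_all (r : {poly K}) :
  (size r <= q)%N -> (forall x, r.[x] = 0) -> r = 0.
Proof.
move=> sr hr; apply: (@roots_geq_poly_eq0 _ _ (enum K)).
- by apply/allP=> x _; rewrite /root hr.
- exact: enum_uniq.
- by rewrite -cardE.
Qed.

Lemma tri_sum (V : nmodType) n (f : nat -> nat -> V) :
  (forall a b, (n <= a + b)%N -> f a b = 0) ->
  \sum_(a < n) \sum_(b < n) f a b = \sum_(j < n) \sum_(a < j.+1) f a (j - a)%N.
Proof.
move=> hf.
transitivity (\sum_(j < n) \sum_(a < n) (if (a < j.+1)%N then f a (j - a)%N else 0)); last first.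
  apply: eq_bigr => j _; rewrite (big_ord_widen n (fun a => f a (j - a)%N)) //.
  by rewrite [RHS]big_mkcond.
rewrite [RHS]exchange_big /=.
apply: congr_big => // a _.
rewrite -(big_mkord predT (fun b => f a b)).
rewrite -(big_mkord predT (fun j => if (a < j.+1)%N then f a (j - a)%N else 0)).
have -> : \sum_(0 <= b < n) f a b = \sum_(0 <= b < n - a) f a b.
  rewrite (big_nat_widen 0 (n - a) n) ?leq_subr //.
  rewrite [RHS]big_mkcond /=; apply: eq_bigr => b _; case: ifP => // hb.
  by rewrite hf //; move: hb; rewrite ltn_subRL addnC => /negbT; rewrite -leqNgt.
rewrite [RHS](@big_cat_nat _ _ _ a) //= ?(ltnW (ltn_ord a)) //.
rewrite [X in _ = X + _]big1_seq ?add0r; last first.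
  by move=> j; rewrite mem_index_iota => /andP [_ hj]; rewrite ltnS leqNgt; case/andP: hj => _ ->.
rewrite -[in RHS](add0n a) big_addn !add0n; apply: eq_bigr => b _.
by rewrite ltnS leq_addl addnK.
Qed.


Lemma alg t (p : nat -> nat -> K) (lam : 'I_t -> K) :
  (t <= q.-1)%N -> injective lam ->
  (forall a b, (q <= a + b)%N -> p a b = 0) -> p 0%N 0%N != 0 ->
  (forall i v, v != 0 ->
     \sum_(a < q) \sum_(b < q) p a b * (lam i * v) ^+ a * v ^+ b = 0) ->
  (q - t <= #|[set s : K | (s != 0%R) && (\sum_(a < q) p a 0 * s ^+ a == 0%R)%R]|)%N ->
  forall s, s != 0 -> \sum_(a < q) p a 0%N * s ^+ a = 0.
Proof.
move=> ht laminj hp hc hl hS.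
have q1 := q_gt1.
set c := p 0%N 0%N.
pose B j : {poly K} := \poly_(a < j.+1) p a (j - a)%N.
pose phi i : {poly K} := \poly_(j < q) (B j).[lam i].
pose E : {poly K} := c *: (1 - 'X^(q.-1)).
have sE : (size E <= q)%N.
  apply: leq_trans (size_scale_leq _ _) _.
  apply: leq_trans (size_polyD _ _) _; rewrite size_polyN size_polyXn size_poly1.
  by rewrite (ltn_predK q1) geq_max leqnn ltnW.
have EE x : x != 0 -> E.[x] = 0.
  by move=> nx; rewrite /E hornerZ hornerD hornerN hornerXn hornerC fermat // subrr mulr0.
have E0 : E.[0] = c.
  by rewrite /E hornerZ hornerD hornerN hornerXn hornerC expr0n /= -subn1 subn_eq0 leqNgt q1 subr0 mulr1.
have coefE j : (0 < j < q.-1)%N -> E`_j = 0.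
  move=> /andP [j0 jq]; rewrite /E coefZ coefB coef1 coefXn.
  by rewrite (gtn_eqF j0) (ltn_eqF jq) subrr mulr0.
have phiE i : phi i = E.
  apply/eqP; rewrite -subr_eq0; apply/eqP; apply: poly_vanish_all.
    by apply: leq_trans (size_polyD _ _) _; rewrite size_polyN geq_max sE size_poly.
  move=> x; rewrite hornerD hornerN; have [->|nx] := eqVneq x 0.
    rewrite E0 horner_coef0 coef_poly (ltnW q1) /B horner_poly big_ord1 expr0 mulr1.
    by rewrite subrr.
  rewrite EE // subr0 -(hl i x nx) (@tri_sum _ _ (fun a b : nat => p a b * (lam i * x) ^+ a * x ^+ b)); last first.
    by move=> a b hab; rewrite hp // !mul0r.
  rewrite /phi horner_poly; apply: eq_bigr => j _.
  rewrite /B horner_poly mulr_suml; apply: eq_bigr => a _.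
  by rewrite exprMn -!mulrA -exprD subnKC // -ltnS.
have Bj j : (0 < j < t)%N -> p j 0%N = 0.
  move=> /andP [j0 jt].
  have Bj0 : B j = 0.
    apply: (@roots_geq_poly_eq0 _ _ (map lam (enum 'I_t))).
    - apply/allP => x /mapP [i _ ->]; rewrite /root.
      have := congr1 (fun r : {poly K} => r`_j) (phiE i); rewrite /= coefE.
        by rewrite coef_poly (leq_trans jt (leq_trans ht (leq_pred _))) => ->.
      by rewrite j0 (leq_trans jt ht).
    - by rewrite map_inj_uniq ?enum_uniq.
    - by rewrite size_map size_enum_ord; apply: leq_trans (size_poly _ _) _.
  by have := congr1 (fun r : {poly K} => r`_j) Bj0; rewrite /= coef_poly ltnSn subnn coef0.
pose psi : {poly K} := \poly_(a < q) p a 0%N.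
have psiE x : psi.[x] = \sum_(a < q) p a 0%N * x ^+ a by rewrite horner_poly.
pose D := psi - E.
have sD : (size D <= q)%N.
  by apply: leq_trans (size_polyD _ _) _; rewrite size_polyN geq_max sE size_poly.
have Dtake : take_poly t D = 0.
  apply/polyP => j; rewrite coef_take_poly coef0; case: ifP => // jt.
  rewrite coefB /psi coef_poly (leq_trans jt (leq_trans ht (leq_pred _))).
  have [->|j0] := posnP j.
    rewrite /E coefZ coefB coef1 coefXn /= eq_sym -subn1 subn_eq0 leqNgt q1.
    by rewrite subr0 mulr1 subrr.
  by rewrite coefE ?j0 ?(leq_trans jt ht) // Bj ?j0 ?jt // subrr.
have DR : D = drop_poly t D * 'X^t by rewrite -{1}(poly_take_drop t D) Dtake add0r.
set S := [set s : K | _] in hS.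
have R0 : drop_poly t D = 0.
  apply: (@roots_geq_poly_eq0 _ _ (enum S)).
  - apply/allP => x; rewrite mem_enum inE => /andP [nx /eqP px].
    have : D.[x] = 0 by rewrite hornerD hornerN EE // psiE px subrr.
    rewrite {1}DR hornerM hornerXn => /eqP; rewrite mulf_eq0 expf_eq0 (negbTE nx).
    by rewrite andbF orbF.
  - exact: enum_uniq.
  - by rewrite -cardE size_drop_poly; apply: leq_trans hS; apply: leq_sub2r.
move=> s ns; rewrite -psiE.
have : D.[s] = 0 by rewrite DR R0 mul0r horner0.
by rewrite hornerD hornerN EE // subr0.
Qed.


End Alg.


Section Poly.
Variable K : fieldType.

Definition mn2 (a b : nat) : 'X_{1..2} := [multinom (if i == ord0 then a else b) | i < 2].

Lemma mn2_0 a b : mn2 a b ord0 = a. Proof. by rewrite mnmE. Qed.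
Lemma mn2_1 a b : mn2 a b ord_max = b. Proof. by rewrite mnmE. Qed.

Lemma ord2P (i : 'I_2) : i = ord0 \/ i = ord_max.
Proof. case: i => [[|[|k]] hk]; [left|right|by []]; exact/val_inj. Qed.

Lemma mn2_eq a b (m : 'X_{1..2}) : (mn2 a b == m) = (a == m ord0) && (b == m ord_max).
Proof.
apply/eqP/andP => [<-|[/eqP -> /eqP ->]]; first by rewrite mn2_0 mn2_1.
by apply/mnmP => i; case: (ord2P i) => ->; rewrite ?mn2_0 ?mn2_1.
Qed.

Lemma w0 : widen_ord (leqnSn 1) (ord0 : 'I_1) = ord0 :> 'I_2.
Proof. exact/val_inj. Qed.

Lemma mdeg_mn2 (m : 'X_{1..2}) : mdeg m = (m ord0 + m ord_max)%N.
Proof. by rewrite mdegE big_ord_recr big_ord1 /= w0. Qed.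

Lemma eval_mn2 (x : 'I_2 -> K) a b :
  \prod_(i < 2) x i ^+ mn2 a b i = x ord0 ^+ a * x ord_max ^+ b.
Proof. by rewrite big_ord_recr big_ord1 /= w0 mn2_0 mn2_1. Qed.

Lemma sum_delta (V : nmodType) n (g : nat -> V) k :
  \sum_(a < n) (if (a : nat) == k then g a else 0) = if (k < n)%N then g k else 0.
Proof.
case: (ltnP k n) => hk.
  rewrite (bigD1 (Ordinal hk)) //= eqxx big1 ?addr0 // => i.
  by rewrite -val_eqE /= => /negbTE ->.
by apply: big1 => i _; case: eqP => // ei; move: (ltn_ord i); rewrite ei ltnNge hk.
Qed.

Lemma sum_delta2 (V : nmodType) n (c : V) k0 k1 :
  \sum_(a < n) \sum_(b < n) (if ((a : nat) == k0) && ((b : nat) == k1) then c else 0) =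
  if (k0 < n)%N && (k1 < n)%N then c else 0.
Proof.
transitivity (\sum_(a < n) (if (a : nat) == k0 then (if (k1 < n)%N then c else 0) else 0)).
  apply: eq_bigr => a _; case: eqP => _ /=; first exact: (sum_delta _ (fun _ => c)).
  exact: big1.
by rewrite (sum_delta _ (fun _ => if (k1 < n)%N then c else 0)); case: (k0 < n)%N.
Qed.

Lemma expand2 (P : {mpoly K[2]}) n (x : 'I_2 -> K) : (msize P <= n)%N ->
  P.@[x] = \sum_(a < n) \sum_(b < n) P@_(mn2 a b) * x ord0 ^+ a * x ord_max ^+ b.
Proof.
move=> hP.
have eP : P = \sum_(a < n) \sum_(b < n) P@_(mn2 a b) *: 'X_[mn2 a b].
  apply/mpolyP => m; rewrite raddf_sum.
  transitivity (\sum_(a < n) \sum_(b < n)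
     (if ((a : nat) == m ord0) && ((b : nat) == m ord_max) then P@_m else 0)); last first.
    apply: eq_bigr => a _; rewrite raddf_sum; apply: eq_bigr => b _.
    symmetry; rewrite /= mcoeffZ mcoeffX mn2_eq.
    case: andP => [[/eqP ea /eqP eb]|]; rewrite ?mulr1 ?mulr0 //.
    by rewrite ea eb; congr (P@_ _); apply/eqP; rewrite mn2_eq !eqxx.
  rewrite sum_delta2; case: ltnP => h0; case: ltnP => h1 //=;
  apply/eqP; rewrite mcoeff_eq0; apply: msize_mdeg_ge; rewrite mdeg_mn2;
  apply: (leq_trans hP);
  first [exact: leq_trans h0 (leq_addr _ _) | exact: leq_trans h1 (leq_addl _ _)].
rewrite {1}eP (raddf_sum (meval x)); apply: eq_bigr => a _; rewrite (raddf_sum (meval x)); apply: eq_bigr => b _.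
by rewrite /= mevalZ mevalX eval_mn2 mulrA.
Qed.


Lemma msize_mul_le (p r : {mpoly K[2]}) a b :
  (msize p <= a.+1)%N -> (msize r <= b.+1)%N -> (msize (p * r) <= (a + b).+1)%N.
Proof.
move=> hp hr.
have [->|p0] := eqVneq p 0; first by rewrite mul0r msize0.
have [->|r0] := eqVneq r 0; first by rewrite mulr0 msize0.
rewrite msizeM //; move: hp hr; set u := msize p; set v := msize r; lia.
Qed.

Lemma msize_pow (p : {mpoly K[2]}) k : (msize p <= 2)%N -> (msize (p ^+ k) <= k.+1)%N.
Proof.
move=> hp; elim: k => [|k ih]; first by rewrite expr0 msize1.
by rewrite exprS; apply: (msize_mul_le (a := 1%N) hp ih).
Qed.

Lemma msize_prodX (lq : 'I_3 -> {mpoly K[2]}) (m : 'X_{1..3}) :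
  (forall i, msize (lq i) <= 2)%N ->
  (msize (\prod_(i < 3) lq i ^+ m i) <= (mdeg m).+1)%N.
Proof.
move=> hl; rewrite mdegE.
elim/big_rec2: _ => [|i k y _ h]; first by rewrite msize1.
exact: msize_mul_le (msize_pow _ (hl i)) h.
Qed.

Lemma msize_comp (F : {mpoly K[3]}) d (lq : 3.-tuple {mpoly K[2]}) :
  F \is d.-homog -> (forall i, msize (tnth lq i) <= 2)%N ->
  (msize (F \mPo lq) <= d.+1)%N.
Proof.
move=> hF hl; rewrite comp_mpolyEX big_seq.
apply: (big_ind (fun r : {mpoly K[2]} => msize r <= d.+1)%N).
- by rewrite msize0.
- by move=> x y hx hy; apply: leq_trans (msizeD_le _ _) _; rewrite geq_max hx.
- move=> m hm; apply: leq_trans (msizeZ_le _ _) _.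
  rewrite comp_mpolyX -(dhomog_mf hF hm); exact: msize_prodX.
Qed.

Lemma msize_lin (c a b : K) (i j : 'I_2) :
  (msize (c%:MP + a *: 'X_i + b *: 'X_j : {mpoly K[2]}) <= 2)%N.
Proof.
apply: leq_trans (msizeD_le _ _) _; rewrite geq_max; apply/andP; split.
  apply: leq_trans (msizeD_le _ _) _; rewrite geq_max; apply/andP; split.
    by rewrite msizeC; case: (c != 0).
  by apply: leq_trans (msizeZ_le _ _) _; rewrite msizeX mdeg1.
by apply: leq_trans (msizeZ_le _ _) _; rewrite msizeX mdeg1.
Qed.

Definition linq (x u w : 'I_3 -> K) : 3.-tuple {mpoly K[2]} :=
  [tuple (x i)%:MP + (u i) *: 'X_ord0 + (w i) *: 'X_ord_max | i < 3].

Lemma linq_size x u w i : (msize (tnth (linq x u w) i) <= 2)%N.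
Proof. by rewrite tnth_mktuple msize_lin. Qed.

Lemma linq_eval (F : {mpoly K[3]}) x u w (v : 'I_2 -> K) :
  (F \mPo linq x u w).@[v] = F.@[fun i => x i + v ord0 * u i + v ord_max * w i].
Proof.
rewrite comp_mpoly_meval; apply: meval_eq => i.
by rewrite tnth_mktuple !mevalD mevalC !mevalZ !mevalXU ![_ * v _]mulrC.
Qed.

End Poly.


Ltac vring := rewrite /det /dot /cross /scv /comb ?cE; ring.

Section Main.
Variable K : fieldType.
Local Notation vec := {ffun 'I_3 -> K}.

Lemma onLineE (L P : vec) : onLine L P = (dot L P == 0).
Proof. by rewrite /onLine dotE. Qed.

Lemma combE (x : vec) a y b z i : comb x a y b z i = x i + a * y i + b * z i.
Proof. by case: (ord3P i) => ->; rewrite -/(c0 _) -/(c1 _) -/(c2 _) !cE. Qed.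

Lemma comb0 (x y z : vec) : comb x 0 y 0 z = x.
Proof. by apply: vecP; rewrite /comb !cE; ring. Qed.

Lemma dot_scv (A X : vec) r : dot A (scv r X) = r * dot A X.
Proof. vring. Qed.

Lemma sum0pow n (g : nat -> K) : (0 < n)%N -> \sum_(a < n) g a * 0 ^+ a = g 0%N.
Proof.
case: n => // n _; rewrite big_ord_recl /= expr0 mulr1 big1 ?addr0 // => i _.
by rewrite exprS mul0r mulr0.
Qed.

Lemma id1 (A L : vec) : dot A (cross A L) = 0. Proof. vring. Qed.
Lemma id1' (A L : vec) : dot L (cross A L) = 0. Proof. vring. Qed.
Lemma id2 (A B L Q : vec) : det (cross A L) (cross B L) Q = - det A L B * dot L Q.
Proof. vring. Qed.
Lemma plucker (A I Bl J L : vec) :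
  det A L I * det Bl L J - det A L J * det Bl L I = det A L Bl * det I L J.
Proof. vring. Qed.
Lemma id4 (X Y W L Q : vec) (k : 'I_3) :
  det (cross X L) (cross Y L) Q * cross W L k =
  - det (cross Y L) (cross W L) Q * cross X L k + det (cross X L) (cross W L) Q * cross Y L k.
Proof.
have e0 : forall v : vec, v ord0 = c0 v by [].
have e1 : forall v : vec, v i1 = c1 v by [].
have e2 : forall v : vec, v i2 = c2 v by [].
case: (ord3P k) => ->; rewrite ?e0 ?e1 ?e2; vring.
Qed.

Lemma frac_comb (al be D1 D2 : K) : be != 0 -> al * D1 + be * D2 = 0 -> al / be * D1 + D2 = 0.
Proof.
move=> hb h; have -> : al / be * D1 + D2 = (al * D1 + be * D2) / be by field.
by rewrite h mul0r.
Qed.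

Lemma bac (A B Q : vec) : cross (cross A B) Q =
  mkv (c0 B * dot A Q - c0 A * dot B Q) (c1 B * dot A Q - c1 A * dot B Q)
      (c2 B * dot A Q - c2 A * dot B Q).
Proof. apply: vecP; rewrite !cE; vring. Qed.

Lemma lines_omega (Q0 linf A B : vec) : normalized A -> normalized B -> normalized Q0 ->
  dot A Q0 = 0 -> dot B Q0 = 0 -> dot linf Q0 != 0 -> A != B -> det A linf B != 0.
Proof.
move=> nA nB nQ hA hB hk AB.
have cAB : cross A B != 0.
  apply: contra AB => /eqP h; have [mu e] := cross_eq0 (norm_neq0 nB) h.
  by apply/eqP; exact: norm_uniq nA nB e.
have cQ : cross (cross A B) Q0 = 0.
  by rewrite bac hA hB; apply/vec0; rewrite !cE !mulr0 !subrr.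
have [mu e] := cross_eq0 (norm_neq0 nQ) cQ.
have -> : det A linf B = - (mu * dot linf Q0).
  transitivity (- dot (cross A B) linf); first by vring.
  by rewrite e; vring.
rewrite oppr_eq0 mulf_neq0 //; apply: contra cAB => /eqP m0.
by rewrite e m0; apply/eqP/vec0; rewrite /scv !cE !mul0r.
Qed.

Lemma dir_neq0 (Q0 linf A : vec) : normalized A -> dot A Q0 = 0 -> dot linf Q0 != 0 ->
  linf != 0 -> cross A linf != 0.
Proof.
move=> nA hA hk nl; apply/eqP => h; have [mu e] := cross_eq0 nl h.
have : dot A Q0 = mu * dot linf Q0 by rewrite e; vring.
rewrite hA => /esym/eqP; rewrite mulf_eq0 (negbTE hk) orbF => /eqP m0.
by move: (norm_neq0 nA); rewrite e m0; apply/negP/negPn/eqP/vec0; rewrite /scv !cE !mul0r.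
Qed.

Lemma decomp (Q0 linf l P d1 : vec) : dot l Q0 = 0 -> dot linf Q0 != 0 ->
  dot l P = 0 -> dot linf P != 0 -> cross l linf != 0 ->
  exists r s, r != 0 /\ P = scv r (comb Q0 s (cross l linf) 0 d1).
Proof.
move=> hlQ hk hlP hP hd.
set k := dot linf Q0 in hk *; set lP := dot linf P in hP *.
pose X := mkv (k * c0 P - lP * c0 Q0) (k * c1 P - lP * c1 Q0) (k * c2 P - lP * c2 Q0).
have hX : cross X (cross l linf) = 0.
  have e1 : dot X linf = 0 by rewrite /X /k /lP; vring.
  have e2 : dot X l = 0.
    transitivity (k * dot l P - lP * dot l Q0); first by rewrite /X /k /lP; vring.
    by rewrite hlP hlQ !mulr0 subrr.
  have -> : cross X (cross l linf) = mkv (c0 l * dot X linf - c0 linf * dot X l)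
     (c1 l * dot X linf - c1 linf * dot X l) (c2 l * dot X linf - c2 linf * dot X l).
    by apply: vecP; rewrite !cE; vring.
  by rewrite e1 e2; apply/vec0; rewrite !cE !mulr0 !subrr.
have [mu e] := cross_eq0 hd hX.
exists (lP / k), (mu / lP); split; first by rewrite mulf_neq0 ?invr_eq0.
have ek : forall f : vec -> K,
   k * f P - lP * f Q0 = mu * f (cross l linf) -> f P = lP / k * (f Q0 + mu / lP * f (cross l linf) + 0 * f d1).
  move=> f h; transitivity ((lP * f Q0 + mu * f (cross l linf)) / k); last by field; rewrite hP hk.
  by rewrite -h; field.
set dl := cross l linf in e ek *; clearbody dl.
have e0 := congr1 c0 e; have e1 := congr1 c1 e; have e2 := congr1 c2 e.
rewrite /X /scv !cE in e0 e1 e2.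
by apply: vecP; rewrite /scv /comb !cE; apply: ek.
Qed.

End Main.

Theorem proposition3p8 (K : finFieldType) (q : nat) (F : {mpoly K[3]})
  (Q0 linf : {ffun 'I_3 -> K}) (t : nat) (ls : 'I_t -> {ffun 'I_3 -> K})
  (l : {ffun 'I_3 -> K}) :
  #|K| = q -> (5 <= q)%N ->
  plane_curve (q.-1) F -> no_rational_linear_component F ->
  Nq F = (q.-1 ^ 2)%N ->
  normalized Q0 -> ~~ onCurve F Q0 ->
  normalized linf -> ~~ onLine linf Q0 ->
  (2 <= t)%N -> (t <= q.-1)%N ->
  injective ls ->
  (forall i, normalized (ls i) /\ onLine (ls i) Q0) ->
  (forall i (P : {ffun 'I_3 -> K}), normalized P -> onLine (ls i) P ->
      P != Q0 -> ~~ onLine linf P -> P \in rat_points F) ->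
  normalized l -> onLine l Q0 -> (forall i, l != ls i) ->
  (q - t <= #|[set P in rat_points F | onLine l P && ~~ onLine linf P]|)%N ->
  forall P : {ffun 'I_3 -> K}, normalized P -> onLine l P ->
    P != Q0 -> ~~ onLine linf P -> P \in rat_points F.
Proof.
move=> hq q5 [F0 hF] _ _ nQ0 hQ0 nlinf hlinfQ0 t2 tq lsinj hls hlsX nl hlQ0 hlne hcount.
subst q.
have q0 : (0 < #|K|)%N by apply: leq_trans q5.
rewrite onLineE in hlinfQ0; rewrite onLineE in hlQ0; move/eqP: hlQ0 => hlQ0.
set k := dot linf Q0 in hlinfQ0.
have nQ := norm_neq0 nQ0; have nlf := norm_neq0 nlinf.
have hlsQ i : dot (ls i) Q0 = 0 by apply/eqP; rewrite -onLineE; case: (hls i).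
have nls i : normalized (ls i) by case: (hls i).
have t0 : (0 < t)%N by apply: leq_trans t2.
pose i0 := Ordinal t0.
pose dl := cross l linf; pose d1 := cross (ls i0) linf.
pose dd i := cross (ls i) linf.
pose aa i := - det d1 (dd i) Q0; pose bb i := det dl (dd i) Q0.
pose lam i := aa i / bb i.
have hdl : dl != 0 by exact: (dir_neq0 nl hlQ0 hlinfQ0 nlf).
have hom (r : K) (x : {ffun 'I_3 -> K}) : F.@[scv r x] = r ^+ #|K|.-1 * F.@[x].
  exact: hom_eval hF.
have hb i : bb i != 0.
  have -> : bb i = - det l linf (ls i) * k by rewrite /bb /dl /dd id2.
  by rewrite mulf_neq0 // oppr_eq0 (lines_omega nl (nls i) nQ0 hlQ0 (hlsQ i) hlinfQ0 (hlne i)).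
have ls0l : det (ls i0) linf l != 0.
  apply: (lines_omega (nls i0) nl nQ0 (hlsQ i0) hlQ0 hlinfQ0); rewrite eq_sym; exact: hlne.
have laminj : injective lam.
  move=> i j; rewrite /lam => /eqP; rewrite eqr_div ?hb // => /eqP e.
  apply/eqP; apply: contraT => nij.
  have : aa i * bb j - aa j * bb i = - (k ^+ 2) * det (ls i0) linf l * det (ls i) linf (ls j).
    rewrite /aa /bb /d1 /dl /dd /k; vring.
  rewrite e subrr => /esym/eqP; rewrite !mulf_eq0 oppr_eq0 expf_eq0 /= (negbTE hlinfQ0).
  have nij' : ls i != ls j by apply: contra nij => /eqP /lsinj ->.
  by rewrite (negbTE ls0l) (negbTE (lines_omega (nls i) (nls j) nQ0 (hlsQ i) (hlsQ j) hlinfQ0 nij')).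
pose G := F \mPo linq Q0 dl d1.
pose p (a b : nat) := G@_(mn2 a b).
have sG : (msize G <= #|K|)%N.
  by rewrite -(prednK q0); apply: msize_comp hF _; exact: linq_size.
have Gev s v : F.@[comb Q0 s dl v d1] =
    \sum_(a < #|K|) \sum_(b < #|K|) p a b * s ^+ a * v ^+ b.
  have := expand2 (fun j : 'I_2 => if j == ord0 then s else v) sG.
  rewrite linq_eval /= => <-; apply: meval_eq => i; by rewrite combE.
have hp a b : (#|K| <= a + b)%N -> p a b = 0.
  move=> hab; apply/eqP; rewrite mcoeff_eq0; apply: msize_mdeg_ge.
  by rewrite mdeg_mn2 mn2_0 mn2_1; apply: leq_trans sG hab.
have Gev0 s : F.@[comb Q0 s dl 0 d1] = \sum_(a < #|K|) p a 0%N * s ^+ a.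
  rewrite Gev; apply: eq_bigr => a _.
  exact: (sum0pow (fun b => p a b * s ^+ a) q0).
have hp00 : p 0%N 0%N != 0.
  have := Gev0 0; rewrite comb0 (sum0pow (fun a => p a 0%N) q0) => <-.
  exact: hQ0.
have hl i v : v != 0 ->
    \sum_(a < #|K|) \sum_(b < #|K|) p a b * (lam i * v) ^+ a * v ^+ b = 0.
  move=> nv; rewrite -Gev.
  set X := comb Q0 (lam i * v) dl v d1.
  have key : aa i * dot (ls i) dl + bb i * dot (ls i) d1 = 0.
    rewrite /aa /bb /d1 /dl /dd; vring.
  have hXi : dot (ls i) X = 0.
    transitivity (dot (ls i) Q0 + v * (lam i * dot (ls i) dl + dot (ls i) d1)); first by rewrite /X; vring.
    by rewrite hlsQ (frac_comb (hb i) key) mulr0 addr0.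
  have hXk : dot linf X = k by rewrite /X /k /dl /d1; vring.
  have hXl : dot l X = v * det (ls i0) linf l.
    transitivity (dot l Q0 + v * det (ls i0) linf l); first by rewrite /X /dl /d1; vring.
    by rewrite hlQ0 add0r.
  have nX : X != 0.
    apply/eqP => X0; move/eqP: hlinfQ0; apply; rewrite -hXk X0 /dot /c0 /c1 /c2 !ffunE; ring.
  have [r nr nrX] := nrm_ex nX.
  have := hlsX i (scv r X) nrX.
  rewrite !onLineE !dot_scv hXi hXk mulr0 eqxx mulf_eq0 (negbTE nr) (negbTE hlinfQ0) /=.
  have -> : scv r X != Q0.
    apply/eqP => e; move: hlQ0; rewrite -e dot_scv hXl => /eqP.
    by rewrite !mulf_eq0 (negbTE nr) (negbTE nv) (negbTE ls0l).
  move=> /(_ isT isT isT); rewrite inE => /andP [_]; rewrite /onCurve hom.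
  by rewrite mulf_eq0 expf_eq0 (negbTE nr) andbF /= => /eqP.
pose C s := comb Q0 s dl 0 d1.
have sfact (P : {ffun 'I_3 -> K}) r s : normalized P -> P = scv r (C s) -> P != Q0 -> s != 0.
  move=> nP eP PQ; apply: contra PQ => /eqP s0; apply/eqP.
  by apply: (norm_uniq nP nQ0 (mu := r)); rewrite eP /C s0 comb0.
have Ffact (P : {ffun 'I_3 -> K}) r s : r != 0 -> P = scv r (C s) -> F.@[P] = 0 ->
    \sum_(a < #|K|) p a 0%N * s ^+ a = 0.
  move=> nr eP; rewrite -Gev0 eP hom => /eqP; rewrite mulf_eq0 expf_eq0 (negbTE nr) andbF /=.
  by move/eqP.
pose g (P : {ffun 'I_3 -> K}) : K :=
  odflt 0 [pick s | [exists r, (r != 0) && (P == scv r (C s))]].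
have gP (P : {ffun 'I_3 -> K}) : dot l P = 0 -> dot linf P != 0 ->
    exists2 r, r != 0 & P = scv r (C (g P)).
  move=> h1 h2; have [r [s [nr e]]] := decomp d1 hlQ0 hlinfQ0 h1 h2 hdl.
  rewrite /g; case: pickP => [s' /existsP [r' /andP [nr' /eqP e']] | none] /=.
    by exists r'.
  exfalso; move/negbT/existsPn: (none s) => /(_ r).
  by rewrite nr -/(C s) -e eqxx.
pose S := [set s : K | (s != 0) && (\sum_(a < #|K|) p a 0%N * s ^+ a == 0)].
have hcount' : (#|K| - t <= #|S|)%N.
  apply: leq_trans hcount _.
  set Sl := [set P in rat_points F | _].
  have inj : {in Sl &, injective g}.
    move=> P P'; rewrite !inE => /andP [/andP [nP _] /andP [h1 h2]] /andP [/andP [nP' _] /andP [h1' h2']] e.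
    rewrite !onLineE in h1 h2 h1' h2'.
    have [r nr eP] := gP P (eqP h1) h2; have [r' nr' eP'] := gP P' (eqP h1') h2'.
    apply: (norm_uniq nP nP' (mu := r / r')).
    by rewrite eP eP' e; apply/ffunP => i; rewrite !scvE mulrA divfK.
  rewrite -(card_in_imset inj); apply: subset_leq_card; apply/subsetP => _ /imsetP [P hP ->].
  move: hP; rewrite !inE => /andP [/andP [nP cP] /andP [h1 h2]].
  rewrite !onLineE in h1 h2.
  have [r nr eP] := gP P (eqP h1) h2.
  rewrite (sfact P r (g P) nP eP); last first.
    by apply: contraNneq hQ0 => PQ; rewrite -PQ.
  by rewrite (Ffact P r (g P) nr eP) ?eqxx //; apply/eqP.
have H := alg tq laminj hp hp00 hl hcount'.
move=> P nP hlP PQ0 hPinf; rewrite onLineE in hlP; rewrite onLineE in hPinf.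
have [r nr eP] := gP P (eqP hlP) hPinf.
have sn := sfact P r (g P) nP eP PQ0.
by rewrite inE nP /onCurve /= eP hom /C Gev0 H // mulr0.
Qed.
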